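(* Let $p$ be an odd prime and $m,r$ positive integers. Then $S_{mp^r-1}\equiv(-1)^{\frac{p-1}{2}}S_{mp^{r-1}-1}\pmod{p^r}$.
   Context: $(S_n)_{n\ge0}$ is the integer sequence defined by $S_0=1$, $S_1=4$ and $(n+1)^2S_{n+1}=4(3n^2+3n+1)S_n-32n^2S_{n-1}$ for $n\ge1$; equivalently $S_n=\sum_{k=0}^n\binom nk\binom{2k}k\binom{2n-2k}{n-k}$. *)

(* Defs.v *)
From mathcomp Require Import all_boot all_order all_algebra.
Set Implicit Arguments. Unset Strict Implicit. Unset Printing Implicit Defensive.

Definition S (n : nat) : nat :=
  \sum_(0 <= k < n.+1) 'C(n, k) * 'C(2 * k, k) * 'C(2 * n - 2 * k, n - k).

(* Main.v *)
Require Import Defs.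
From mathcomp Require Import all_boot all_order all_algebra.
From mathcomp Require Import zify ring.
Import GRing.Theory Num.Theory.

Definition u (p n : nat) : nat := \prod_(0 <= t < n.+1 | ~~ (p %| t)) t.

Lemma u0 p : u p 0 = 1.
Proof. by rewrite /u big_mkcond big_nat1 dvdn0. Qed.

Lemma uS p n : u p n.+1 = u p n * (if p %| n.+1 then 1 else n.+1).
Proof.
rewrite /u big_mkcond big_nat_recr //= -big_mkcond /=.
by case: (p %| n.+1).
Qed.

Lemma fact_decomp p n : 0 < p ->
  n`! = p ^ (n %/ p) * (n %/ p)`! * u p n.
Proof.
move=> p0; elim: n => [|n IH]; first by rewrite div0n u0.
rewrite factS IH uS divnS //.
case: (boolP (p %| n.+1)) => H /=.
  move: (H) => /dvdnP [[|c] Hc]; first by rewrite mul0n in Hc.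
  have Hc' : n %/ p = c.
    have : n.+1 %/ p = c.+1 by rewrite Hc mulnK.
    by rewrite divnS // H add1n => [[]].
  rewrite Hc Hc' add1n factS expnS; ring.
by rewrite add0n; ring.
Qed.

Lemma coprime_u p n : prime p -> coprime p (u p n).
Proof.
move=> pp; rewrite /u; apply: (big_ind (fun x => coprime p x)) => //.
- by rewrite coprimen1.
- by move=> x y; rewrite coprimeMr => -> ->.
by move=> t; rewrite prime_coprime.
Qed.

Definition T (n k : nat) := 'C(n, k) * 'C(2 * k, k) * 'C(2 * n - 2 * k, n - k).

Lemma S_T n : S n = \sum_(0 <= k < n.+1) T n k.
Proof. by []. Qed.

Lemma bin2 k : 'C(2 * k, k) * (k`! * k`!) = (2 * k)`!.
Proof.
have H : k <= 2 * k by lia.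
have e : 2 * k - k = k by lia.
by have := bin_fact H; rewrite e.
Qed.

Lemma Tfact n k : k <= n ->
  T n k * (k`! ^ 3 * (n - k)`! ^ 3) = n`! * (2 * k)`! * (2 * (n - k))`!.
Proof.
move=> kn; rewrite /T -mulnBr.
rewrite -(bin_fact kn) -bin2 -(bin2 (n - k)); ring.
Qed.

Lemma key_ident p h i i' : p = (2 * h).+1 ->
  let k := i * p + h in let j := i' * p + h in
  let M := (i + i').+1 in let N := M * p in
  T (N - 1) k * (u p k ^ 3 * u p j ^ 3) =
  T (M - 1) i * (u p (N - 1) * u p (2 * k) * u p (2 * j)).
Proof.
move=> ph k j M N.
have p0 : 0 < p by rewrite ph.
have hp : h < p by lia.
have h2p : 2 * h < p by lia.
have e2k : 2 * k = (2 * i) * p + 2 * h by rewrite /k; ring.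
have e2j : 2 * j = (2 * i') * p + 2 * h by rewrite /j; ring.
have eN : N - 1 = (i + i') * p + 2 * h by rewrite /N /M; lia.
have eM : M - 1 = i + i' by rewrite /M; lia.
have ej : N - 1 - k = j by rewrite eN /k /j mulnDl; lia.
have ei : M - 1 - i = i' by rewrite eM; lia.
have kN : k <= N - 1 by rewrite eN /k mulnDl; lia.
have iM : i <= M - 1 by rewrite eM; lia.
have dk : k %/ p = i by rewrite /k divnMDl // divn_small // addn0.
have dj : j %/ p = i' by rewrite /j divnMDl // divn_small // addn0.
have d2k : (2 * k) %/ p = 2 * i by rewrite e2k divnMDl // divn_small // addn0.
have d2j : (2 * j) %/ p = 2 * i' by rewrite e2j divnMDl // divn_small // addn0.
have dN : (N - 1) %/ p = i + i' by rewrite eN divnMDl // divn_small // addn0.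
have E1 : T (N - 1) k * (k`! ^ 3 * j`! ^ 3) = (N - 1)`! * (2 * k)`! * (2 * j)`!.
  by have := @Tfact _ _ kN; rewrite ej.
have E2 : T (M - 1) i * (i`! ^ 3 * i'`! ^ 3) = (i + i')`! * (2 * i)`! * (2 * i')`!.
  by have := @Tfact _ _ iM; rewrite ei eM.
rewrite (fact_decomp p k p0) (fact_decomp p j p0) (fact_decomp p (N - 1) p0)
  (fact_decomp p (2 * k) p0) (fact_decomp p (2 * j) p0) dk dj d2k d2j dN in E1.
rewrite eM.
have ep1 : p ^ (i + i') = p ^ i * p ^ i' by rewrite expnD.
have ep2 : p ^ (2 * i) = (p ^ i) ^ 2 by rewrite mulnC expnM.
have ep3 : p ^ (2 * i') = (p ^ i') ^ 2 by rewrite mulnC expnM.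
rewrite ep1 ep2 ep3 in E1.
have P0 : 0 < (p ^ i * p ^ i') ^ 3 * (i`! ^ 3 * i'`! ^ 3).
  by rewrite !muln_gt0 !expn_gt0 p0 !fact_gt0.
move: E1 E2 P0.
rewrite -eM.
generalize (p ^ i) (p ^ i') (T (N - 1) k) (T (M - 1) i) => a b T1 T2 E1 E2 P0.
apply/eqP; rewrite -(eqn_pmul2r P0); apply/eqP.
transitivity (T1 * ((a * i`! * u p k) ^ 3 * (b * i'`! * u p j) ^ 3)); first ring.
rewrite E1.
transitivity (((M - 1)`! * (2 * i)`! * (2 * i')`!) *
  (a ^ 3 * b ^ 3 * (u p (N - 1) * u p (2 * k) * u p (2 * j)))); first ring.
rewrite -E2; ring.
Qed.

Lemma logn_fact_ext p n B : prime p -> n < B ->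
  logn p n`! = \sum_(1 <= t < B) n %/ p ^ t.
Proof.
move=> pp nB; rewrite logn_fact //.
rewrite (@big_cat_nat _ _ _ n.+1 1 B) //=.
rewrite [X in _ = _ + X]big1_seq ?addn0 // => t /andP[_].
rewrite mem_index_iota => /andP[ht _]; apply: divn_small.
apply: leq_trans ht _; apply: ltnW; apply: ltn_expl; exact: prime_gt1.
Qed.

Lemma logn_bin2 p n B : prime p -> 2 * n < B ->
  logn p 'C(2 * n, n) = \sum_(1 <= t < B) ((2 * n) %/ p ^ t - 2 * (n %/ p ^ t)).
Proof.
move=> pp nB.
have H := bin2 n.
have C0 : 0 < 'C(2 * n, n) by rewrite bin_gt0; lia.
have := congr1 (logn p) H; rewrite lognM ?muln_gt0 ?fact_gt0 // lognM ?fact_gt0 //.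
rewrite (@logn_fact_ext p n B pp (_ : n < B)); last by lia.
rewrite (@logn_fact_ext p (2 * n) B pp nB).
have E : \sum_(1 <= t < B) ((2 * n) %/ p ^ t - 2 * (n %/ p ^ t)) +
         (\sum_(1 <= t < B) n %/ p ^ t + \sum_(1 <= t < B) n %/ p ^ t) =
         \sum_(1 <= t < B) (2 * n) %/ p ^ t.
  rewrite -!big_split /=; apply: eq_bigr => t _.
  have dp : 0 < p ^ t by rewrite expn_gt0 prime_gt0.
  have : 2 * (n %/ p ^ t) <= (2 * n) %/ p ^ t.
    rewrite leq_divRL // -mulnA leq_mul2l /=; exact: leq_trunc_div.
  lia.
lia.
Qed.

Lemma term_ge1 p h r N k j t : p = (2 * h).+1 -> prime p -> p ^ r %| N ->
  k + j + 1 = N -> k %% p != h -> 1 <= t <= r ->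
  1 <= ((2 * k) %/ p ^ t - 2 * (k %/ p ^ t)) + ((2 * j) %/ p ^ t - 2 * (j %/ p ^ t)).
Proof.
move=> ph pp prN ekj kh /andP[t1 tr].
have p0 : 0 < p by rewrite prime_gt0.
set d := p ^ t.
have d0 : 0 < d by rewrite expn_gt0 p0.
have dN : d %| N by apply: dvdn_trans prN; apply: dvdn_exp2l.
have g : forall n, (2 * n) %/ d - 2 * (n %/ d) = (2 * (n %% d)) %/ d.
  by move=> n; rewrite {1}(divn_eq n d) mulnDr mulnA divnMDl // addKn.
rewrite !g.
set x := k %% d; set y := j %% d.
case: (leqP d (2 * x)) => [hx|hx]; first by rewrite -(divn_gt0 _ d0) in hx; rewrite addn_gt0 hx.
case: (leqP d (2 * y)) => [hy|hy]; first by rewrite -(divn_gt0 _ d0) in hy; rewrite addn_gt0 hy orbT.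
exfalso.
have dxy : d %| x + y + 1.
  have : d %| (k %/ d + j %/ d) * d + (x + y + 1).
    have -> : (k %/ d + j %/ d) * d + (x + y + 1) = N.
      rewrite -ekj /x /y.
      transitivity ((k %/ d * d + k %% d) + (j %/ d * d + j %% d) + 1); first ring.
      by rewrite -!divn_eq.
    exact: dN.
  by rewrite dvdn_addr // dvdn_mull.
have dle : d <= x + y + 1 by apply: dvdn_leq => //; rewrite addn1.
have ed : 2 * x + 1 = d by clear -hx hy dle; lia.
have pd : p %| d by rewrite /d -(prednK t1) expnS dvdn_mulr.
have xz : x %% p = k %% p by rewrite /x (modn_dvdm _ pd).
have zp : k %% p < p by rewrite ltn_pmod.
have pz : p %| 2 * (k %% p) + 1.
  have : p %| 2 * x + 1 by rewrite ed.
  rewrite {1}(divn_eq x p) xz.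
  have -> : 2 * (x %/ p * p + k %% p) + 1 = (2 * (x %/ p)) * p + (2 * (k %% p) + 1) by ring.
  by rewrite dvdn_addr // dvdn_mull.
move: pz kh zp; set z := k %% p => /dvdnP [c hc] kh zp.
apply: (negP kh); apply/eqP.
rewrite ph in hc zp.
clearbody z; clear -hc zp.
case: c hc => [|[|c]] hc; lia.
Qed.

Lemma dvd_binom p h r N k j : p = (2 * h).+1 -> prime p -> p ^ r %| N ->
  k + j + 1 = N -> k %% p != h -> p ^ r %| 'C(2 * k, k) * 'C(2 * j, j).
Proof.
move=> ph pp prN ekj kh.
have Ck : 0 < 'C(2 * k, k) by rewrite bin_gt0; lia.
have Cj : 0 < 'C(2 * j, j) by rewrite bin_gt0; lia.
rewrite pfactor_dvdn // ?muln_gt0 ?Ck // lognM //.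
set B := (2 * (k + j) + r).+1.
rewrite (@logn_bin2 p k B pp (_ : 2 * k < B)); last by rewrite /B; lia.
rewrite (@logn_bin2 p j B pp (_ : 2 * j < B)); last by rewrite /B; lia.
rewrite -big_split /=.
rewrite (@big_cat_nat _ _ _ r.+1 1 B) //=; last by rewrite /B; lia.
apply: leq_trans (leq_addr _ _).
apply: (@leq_trans (\sum_(1 <= t < r.+1) 1)); first by rewrite sum_nat_const_nat subn1 muln1.
rewrite big_nat_cond [X in _ <= X]big_nat_cond; apply: leq_sum => t /andP[ht _].
apply: (@term_ge1 p h r N k j t ph pp prN ekj kh); lia.
Qed.

Local Open Scope ring_scope.

Definition uR (R : comPzRingType) (p a b : nat) : R :=
  \prod_(a <= t < b | ~~ (p %| t)%N) (t%:R : R).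

Lemma uR_refl (R : comPzRingType) (p L c : nat) :
  (L%:R : R) = 0 -> (p %| L)%N -> (c <= L)%N ->
  uR R p (L - c) L = \prod_(0 <= t < c.+1 | ~~ (p %| t)%N) (- (t%:R : R)).
Proof.
move=> L0 pL; elim: c => [|c IH] cL.
  rewrite subn0 /uR big_geq // big_mkcond big_nat1 dvdn0 //.
have cL' : (c <= L)%N by apply: ltnW.
have e : ((L - c.+1).+1 = L - c)%N by lia.
rewrite /uR big_mkcond big_ltn; last by lia.
rewrite -big_mkcond /= e -/(uR R p (L - c) L) IH //.
rewrite [RHS]big_mkcond big_nat_recr //= -big_mkcond /=.
rewrite (dvdn_subr cL pL) mulrC.
case: (p %| c.+1)%N => //=.
by congr (_ * _); rewrite natrB // L0 sub0r.
Qed.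

Lemma uR_shift (R : comPzRingType) (p L c : nat) :
  (L%:R : R) = 0 -> (p %| L)%N -> uR R p L (L + c) = uR R p 0 c.
Proof.
move=> L0 pL; elim: c => [|c IH].
  by rewrite addn0 /uR !big_geq.
rewrite /uR addnS big_mkcond big_nat_recr ?leq_addr //= -big_mkcond /=.
rewrite [RHS]big_mkcond big_nat_recr //= -big_mkcond /=.
by rewrite -/(uR R p L (L + c)) -/(uR R p 0 c) IH dvdn_addr // natrD L0 add0r.
Qed.

Lemma uR_sign (R : comPzRingType) (p c : nat) : (0 < p)%N ->
  \prod_(0 <= t < c.+1 | ~~ (p %| t)%N) (- (t%:R : R)) =
  (-1) ^+ (c - c %/ p) * uR R p 0 c.+1.
Proof.
move=> p0; elim: c => [|c IH].
  by rewrite /uR div0n subn0 expr0 mul1r big_mkcond big_nat1 [RHS]big_mkcond big_nat1 dvdn0.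
rewrite /uR big_mkcond big_nat_recr //= -big_mkcond /= IH.
rewrite [X in _ = _ * X]big_mkcond big_nat_recr //= -big_mkcond /=.
rewrite (divnS _ p0).
have le : (c %/ p <= c)%N by apply: leq_div.
case: (p %| c.+1)%N => /=.
  by rewrite !mulr1 add1n subSS.

rewrite -/(uR R p 0 c.+1) add0n subSn // exprS; ring.
Qed.

Lemma u_uR (R : comPzRingType) p n : ((u p n)%:R : R) = uR R p 0 n.+1.
Proof. by rewrite /u natr_prod. Qed.

Lemma block_h (R : comUnitRingType) p h i i' M N :
  p = (2 * h).+1 -> M = (i + i').+1 -> N = (M * p)%N -> (N%:R : R) = 0 ->
  (((u p (i * p + h) ^ 3 * u p (i' * p + h) ^ 3)%N)%:R : R) \is a GRing.unit ->
  ((T (N - 1) (i * p + h))%:R : R) = (-1) ^+ h * (T (M - 1) i)%:R.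
Proof.
move=> ph eM eN N0 Xu.
have KI := @key_ident p h i i' ph; rewrite /= -eM -eN in KI.
set k := (i * p + h)%N in KI Xu *; set j := (i' * p + h)%N in KI Xu *.
have p0 : (0 < p)%N by rewrite ph.
have pN : (p %| N)%N by rewrite eN dvdn_mull.
have ekj : (k + j + 1 = N)%N by rewrite eN eM /k /j ph; ring.
have dj : (j %/ p = i')%N by rewrite /j divnMDl // divn_small ?addn0 // ph; lia.
have F1 : ((u p (N - 1))%:R : R) = (-1) ^+ h * (u p k)%:R * (u p j)%:R.
  rewrite !u_uR (_ : (N - 1).+1 = N)%N; last by lia.
  rewrite /uR (@big_cat_nat _ _ _ k.+1) //=; last by lia.
  rewrite -/(uR R p 0 k.+1) -/(uR R p k.+1 N) (_ : k.+1 = N - j)%N; last by lia.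
  rewrite uR_refl //; last by lia.
  rewrite uR_sign // dj.
  have -> : (j - i' = i' * (2 * h) + h)%N by rewrite /j ph; lia.
  rewrite -signr_odd oddD !oddM /= andbF /= signr_odd -/(uR R p 0 j.+1); ring.
have N20 : ((2 * N)%N%:R : R) = 0 by rewrite natrM N0 mulr0.
have pN2 : (p %| 2 * N)%N by rewrite dvdn_mull.
have F2 : ((u p (2 * N - 1))%:R : R) = (u p (2 * k))%:R * (u p (2 * j))%:R.
  rewrite !u_uR (_ : (2 * N - 1).+1 = 2 * N)%N; last by lia.
  rewrite /uR (@big_cat_nat _ _ _ (2 * k).+1) //=; last by lia.
  rewrite -/(uR R p 0 (2 * k).+1) -/(uR R p (2 * k).+1 (2 * N)).
  rewrite (_ : (2 * k).+1 = 2 * N - (2 * j).+1)%N; last by lia.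
  rewrite uR_refl //; last by lia.
  rewrite uR_sign //.
  have e2j : ((2 * j).+1 = (2 * i').+1 * p)%N by rewrite /j ph; ring.
  rewrite e2j mulnK //.
  have -> : ((2 * i').+1 * p - (2 * i').+1 = ((2 * i').+1 * h).*2)%N by rewrite ph; lia.
  rewrite -signr_odd odd_double expr0 mul1r.
  congr (_ * _); rewrite /uR big_mkcond big_nat_recr //= -big_mkcond /=.
  by rewrite dvdn_mull // mulr1.
have F3 : ((u p (2 * N - 1))%:R : R) = (u p (N - 1))%:R ^+ 2.
  rewrite !u_uR (_ : (2 * N - 1).+1 = N + N)%N; last by lia.
  rewrite (_ : (N - 1).+1 = N)%N; last by lia.
  rewrite /uR (@big_cat_nat _ _ _ N) //=; last by lia.
  by rewrite -/(uR R p 0 N) -/(uR R p N (N + N)) uR_shift // expr2.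
have s2 : ((-1) ^+ h : R) ^+ 2 = 1 by rewrite -exprM mulnC exprM expr2 mulN1r opprK expr1n.
have eY : (((u p (N - 1) * u p (2 * k) * u p (2 * j))%N)%:R : R) =
    (-1) ^+ h * ((u p k ^ 3 * u p j ^ 3)%N)%:R.
  rewrite !natrM -mulrA -F2 F3 F1.
  set e := ((-1) ^+ h : R).
  transitivity (e ^+ 2 * (e * ((u p k)%:R ^+ 3 * (u p j)%:R ^+ 3))); first ring.
  by rewrite s2 mul1r.
have := congr1 (fun n => (n%:R : R)) KI; rewrite /= natrM [RHS]natrM eY => KR.
apply: (mulIr Xu); rewrite /= KR; ring.
Qed.

Lemma Zq0 q n : (1 < q)%N -> (q %| n)%N -> (n%:R : 'Z_q) = 0.
Proof. by move=> q1 /dvdnP [c ->]; rewrite natrM pchar_Zp // mulr0. Qed.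

Lemma T_dvd p h r N k : p = (2 * h).+1 -> prime p -> (p ^ r %| N)%N ->
  (k < N)%N -> (k %% p != h)%N -> (p ^ r %| T (N - 1) k)%N.
Proof.
move=> ph pp prN kN kh.
set j := (N - 1 - k)%N.
have ekj : (k + j + 1 = N)%N by rewrite /j; lia.
rewrite /T (_ : (2 * (N - 1) - 2 * k = 2 * j)%N); last by rewrite /j; lia.
by rewrite -mulnA dvdn_mull // (@dvd_binom p h r N k j ph pp prN ekj kh).
Qed.

Lemma split_sum (R : nmodType) (f : nat -> R) M p :
  \sum_(0 <= k < M * p) f k = \sum_(0 <= i < M) \sum_(0 <= s < p) f (i * p + s)%N.
Proof.
elim: M => [|M IH]; first by rewrite mul0n !big_geq.
rewrite big_nat_recr //= -IH mulSn addnC.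
rewrite (@big_cat_nat _ _ _ (M * p)) //=; last by rewrite leq_addr.
congr (_ + _).
rewrite -{1}(add0n (M * p)%N) big_addn addKn.
by apply: eq_bigr => s _; rewrite addnC.
Qed.

Lemma conv_int q a b e : (1 < q)%N ->
  ((a%:R : 'Z_q) = (-1) ^+ e * b%:R) ->
  ((a%:Z = (-1) ^+ e * b%:Z %[mod q%:Z])%Z).
Proof.
move=> q1; rewrite -signr_odd -[X in (_ = X * _ %[mod _])%Z]signr_odd.
case: (odd e) => /= H.
  have H0 : ((a + b)%N%:R : 'Z_q) = 0 by rewrite natrD H expr1 mulN1r addNr.
  have : ((a + b) %% q = 0)%N by rewrite -(val_Zp_nat q1) H0.
  move/eqP; rewrite -/(dvdn q (a + b)) => dq.
  apply/eqP; rewrite eqz_mod_dvd expr1 mulN1r opprK -PoszD dvdzE /=.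
  exact: dq.
rewrite expr0 mul1r in H *.
have : ((a %% q)%N = (b %% q)%N) by rewrite -!(val_Zp_nat q1) H.
by move=> E; rewrite expr0 mul1r !modz_nat E.
Qed.

Theorem theorem3p3 (p m r : nat) (hp : prime p) (hodd : odd p)
    (hm : (0 < m)%N) (hr : (0 < r)%N) :
  ((S (m * p ^ r - 1))%:Z
     = (-1) ^+ ((p - 1) %/ 2) * (S (m * p ^ (r - 1) - 1))%:Z
     %[mod (p ^ r)%:Z])%Z.
Proof.
set h := ((p - 1) %/ 2)%N.
have ph : p = (2 * h).+1.
  have := odd_double_half p; rewrite hodd /h; lia.
have p0 : (0 < p)%N by rewrite prime_gt0.
set q := (p ^ r)%N.
have q1 : (1 < q)%N by rewrite /q -{1}(expn0 p) ltn_exp2l ?prime_gt1.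
set M := (m * p ^ (r - 1))%N.
have eN : (m * p ^ r = M * p)%N by rewrite /M -mulnA -expnSr subn1 prednK.
apply: conv_int => //.
rewrite eN.
have M0 : (0 < M)%N by rewrite /M muln_gt0 hm expn_gt0 p0.
set N := (M * p)%N.
have qN : (q %| N)%N by rewrite /N -eN /q dvdn_mull.
have N0 : (N%:R : 'Z_q) = 0 by apply: Zq0.
rewrite !S_T (_ : (N - 1).+1 = N)%N; last by rewrite /N; lia.
rewrite (_ : (M - 1).+1 = M)%N; last by lia.
rewrite !natr_sum /N split_sum mulr_sumr.
apply: eq_big_nat => i /andP[_ iM].
set i' := (M - 1 - i)%N.
have eM : M = (i + i').+1 by rewrite /i'; lia.
rewrite (bigD1_seq h) /=; last exact: iota_uniq.
  2: by rewrite mem_index_iota ph; lia.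
rewrite big1_seq ?addr0.
  apply: (@block_h _ p h i i' M (M * p)%N) => //.
  rewrite unitZpE // coprime_pexpl // coprimeMr !coprimeXr // coprime_u //.
move=> s /andP[sh]; rewrite mem_index_iota => /andP[_ sp].
apply: Zq0 => //; apply: (@T_dvd p h r) => //.
- rewrite eM mulSn; lia.
- by rewrite modnMDl modn_small.
Qed.
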